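(* For all nonnegative integers $k,d,i,j$ with $k>0$, $$F_{\,kd+id+j(i+1)(2(k-1)d+1),\;d+j(2(k-1)d+1)}=1.$$
   Context: Define maps $G,S:\mathbb Z^2\to\mathbb Z^2$ by $G(x,y)=(x+y,y)$ and $S(x,y)=(3x-2y+1,\,2x-y+1)$. Define the array $(F_{n,k})_{n,k\ge 0}$ by $F_{0,0}=1$ and, for $(n,k)\neq(0,0)$, $F_{n,k}$ is the number of finite words $w=w_1w_2\cdots w_m$ ($m\ge 0$) over the alphabet $\{G,S\}$ with $w_1\circ w_2\circ\cdots\circ w_m(1,1)=(n,k)$ (the empty word acts as the identity). Equivalently: start with all entries $0$, set $F_{0,0}=1$ and $F_{1,1}=1$, and thereafter, whenever an entry $F_{n,k}$ with $n\ge 1$ changes its value, increase $F_{n+k,k}$ and $F_{3n+1-2k,\,2n+1-k}$ by $1$. *)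

(* Defs.v *)
From Stdlib Require Import ZArith List.
Import ListNotations.
Open Scope Z_scope.

Definition Gmap (p : Z * Z) : Z * Z := (fst p + snd p, snd p).
Definition Smap (p : Z * Z) : Z * Z :=
  (3 * fst p - 2 * snd p + 1, 2 * fst p - snd p + 1).

Inductive letter : Type := LG | LS.

Definition act (l : letter) : Z * Z -> Z * Z :=
  match l with LG => Gmap | LS => Smap end.

Definition eval_word (w : list letter) : Z * Z :=
  fold_right (fun l p => act l p) (1, 1) w.

Definition has_card (P : list letter -> Prop) (c : nat) : Prop :=
  exists ws : list (list letter),
    NoDup ws /\ length ws = c /\ (forall w, In w ws <-> P w).

Definition F_is (n k : nat) (c : nat) : Prop :=
  if ((n =? 0)%nat && (k =? 0)%nat)%bool then c = 1%nat
  else has_card (fun w => eval_word w = (Z.of_nat n, Z.of_nat k)) c.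

(* Main.v *)
Require Import Defs.
From Stdlib Require Import Arith.
From Stdlib Require Import ZArith Lia List.
Import ListNotations.

Lemma head_G l w : eval_word (l :: w) = act l (eval_word w).
Proof. reflexivity. Qed.

Lemma inv_pos (w : list letter) :
  1 <= snd (eval_word w) /\ snd (eval_word w) <= fst (eval_word w).
Proof.
  induction w as [|l w IH]; [simpl; lia|]. rewrite head_G.
  destruct (eval_word w) as [x y]; cbn [fst snd] in *.
  destruct l; cbn [act]; unfold Gmap, Smap; cbn [fst snd]; lia.
Qed.

Lemma classify (w : list letter) :
  match w with
  | [] => eval_word w = (1,1)
  | LG :: _ => 2 * snd (eval_word w) <= fst (eval_word w)
  | LS :: _ => 2 * fst (eval_word w) + 2 <= 3 * snd (eval_word w)
  end.
Proof.
  destruct w as [|l w]; [reflexivity|].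
  pose proof (inv_pos w) as H.
  rewrite head_G. destruct (eval_word w) as [x y]; cbn [fst snd] in *.
  destruct l; cbn [act]; unfold Gmap, Smap; cbn [fst snd]; lia.
Qed.

Lemma act_inj l p q : act l p = act l q -> p = q.
Proof.
  destruct p as [a b], q as [c e]; destruct l; cbn [act]; unfold Gmap, Smap; cbn [fst snd];
  intro H; pose proof (f_equal fst H) as H1; pose proof (f_equal snd H) as H2; cbn [fst snd] in H1, H2; f_equal; lia.
Qed.

Lemma eval_inj (w1 w2 : list letter) : eval_word w1 = eval_word w2 -> w1 = w2.
Proof.
  revert w2; induction w1 as [|l1 w1 IH]; intros w2 E.
  - destruct w2 as [|[|] w2]; [reflexivity| |].
    + pose proof (classify (LG::w2)) as C; cbv beta iota in C; rewrite <- E in C;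
      cbn [eval_word fold_right fst snd] in C; lia.
    + pose proof (classify (LS::w2)) as C; cbv beta iota in C; rewrite <- E in C;
      cbn [eval_word fold_right fst snd] in C; lia.
  - destruct w2 as [|l2 w2].
    + exfalso. destruct l1.
      * pose proof (classify (LG::w1)) as C; cbv beta iota in C; rewrite E in C;
        cbn [eval_word fold_right fst snd] in C; lia.
      * pose proof (classify (LS::w1)) as C; cbv beta iota in C; rewrite E in C;
        cbn [eval_word fold_right fst snd] in C; lia.
    + pose proof (inv_pos (l2::w2)) as P.
      destruct l1, l2.
      * f_equal. apply IH. apply (act_inj LG). exact E.
      * exfalso. pose proof (classify (LG::w1)) as C1; pose proof (classify (LS::w2)) as C2;
        cbv beta iota in C1, C2; rewrite E in C1; lia.
      * exfalso. pose proof (classify (LS::w1)) as C1; pose proof (classify (LG::w2)) as C2;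
        cbv beta iota in C1, C2; rewrite E in C1; lia.
      * f_equal. apply IH. apply (act_inj LS). exact E.
Qed.

Lemma evalG (i : nat) w :
  eval_word (repeat LG i ++ w) =
  (fst (eval_word w) + Z.of_nat i * snd (eval_word w), snd (eval_word w)).
Proof.
  induction i as [|i IH]; cbn [repeat app].
  - destruct (eval_word w); cbn [fst snd]; f_equal; lia.
  - rewrite head_G, IH. cbn [act]; unfold Gmap; cbn [fst snd]. f_equal; lia.
Qed.

Lemma evalS (j : nat) w :
  eval_word (repeat LS j ++ w) =
  (fst (eval_word w) + Z.of_nat j * (2 * (fst (eval_word w) - snd (eval_word w)) + 1),
   snd (eval_word w) + Z.of_nat j * (2 * (fst (eval_word w) - snd (eval_word w)) + 1)).
Proof.
  induction j as [|j IH]; cbn [repeat app].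
  - destruct (eval_word w); cbn [fst snd]; f_equal; lia.
  - rewrite head_G, IH. cbn [act]; unfold Smap; cbn [fst snd]. f_equal; lia.
Qed.

Lemma unique_card (w0 : list letter) (p : Z * Z) :
  eval_word w0 = p -> has_card (fun w => eval_word w = p) 1.
Proof.
  intro H. exists [w0]. split; [constructor; [simpl; tauto| constructor]|].
  split; [reflexivity|]. intro w; simpl; split.
  - intros [<-|[]]; exact H.
  - intro Hw. left. apply eval_inj. congruence.
Qed.

Open Scope nat_scope.
Theorem theorem14 (k d i j : nat) (hk : 0 < k) :
  F_is (k * d + i * d + j * (i + 1) * (2 * (k - 1) * d + 1))
       (d + j * (2 * (k - 1) * d + 1)) 1.
Proof.
  unfold F_is.
  destruct (((k * d + i * d + j * (i + 1) * (2 * (k - 1) * d + 1) =? 0)%nat &&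
             (d + j * (2 * (k - 1) * d + 1) =? 0)%nat)%bool) eqn:E; [reflexivity|].
  destruct d as [|d].
  - destruct j as [|j].
    + assert (H1: k*0 + i*0 + 0*(i+1)*(2*(k-1)*0+1) = 0) by lia.
      assert (H2: 0 + 0*(2*(k-1)*0+1) = 0) by lia. rewrite H1, H2 in E. discriminate.
    + apply (unique_card (repeat LG i ++ repeat LS j)).
      rewrite evalG. rewrite <- (app_nil_r (repeat LS j)). rewrite evalS. cbn [eval_word fold_right fst snd].
      f_equal; nia.
  - apply (unique_card (repeat LG i ++ repeat LS j ++ repeat LG (k-1) ++ repeat LS d)).
    rewrite evalG, evalS, evalG. rewrite <- (app_nil_r (repeat LS d)). rewrite evalS.
    cbn [eval_word fold_right fst snd]. destruct k as [|k]; [lia|].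
    replace (S k - 1) with k by lia. f_equal; nia.
Qed.
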